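(* Let $G$ be a graph on $n$ vertices. Then $\mathcal{P}_2(\mathcal{E}_G)=\emptyset$ if and only if $G$ is a disjoint union of complete graphs.
   Context: Work over an algebraically closed field $k$. The Fomin–Kirillov algebra $\mathcal{E}_n$ is the graded $k$-algebra generated by degree-$1$ elements $x_{ij}$, $1\leq i<j\leq n$, subject to: $x_{ij}^2=0$; $x_{ij}x_{kl}=x_{kl}x_{ij}$ whenever $\{i,j\}\cap\{k,l\}=\emptyset$; $x_{ij}x_{jk}-x_{jk}x_{ik}-x_{ik}x_{ij}=0$ and $x_{jk}x_{ij}-x_{ik}x_{jk}-x_{ij}x_{ik}=0$ for $i<j<k$. For a graph $G$ on vertex set $\{1,\dots,n\}$, $\mathcal{E}_G$ is the subalgebra of $\mathcal{E}_n$ generated by the $x_{ij}$ with $\{i,j\}$ an edge of $G$. A degree-$2$ truncated point module over a connected graded algebra $A$ generated in degree $1$ is a graded cyclic module generated in degree $0$ with Hilbert series $1+t+t^2$; $\mathcal{P}_2(A)$ is the space of such modules. *)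

(* Defs.v *)
From HB Require Import structures.
From mathcomp Require Import all_boot all_order all_algebra.
Set Implicit Arguments. Unset Strict Implicit. Unset Printing Implicit Defensive.
Import Order.TTheory GRing.Theory Num.Theory.
Local Open Scope ring_scope.

(* Vertices are 'I_n.  A generator x_{ij} (i<j) of the Fomin--Kirillov
   algebra E_n is indexed by the pair (i,j) : 'I_n * 'I_n; pairs with
   i >= j are unused indices. *)
Notation pr n := ('I_n * 'I_n)%type.

(* Degree-2 part of the tensor algebra T(V): coefficient functions on pairs
   of generator indices; (a,b) stands for the word x_a x_b. *)
Notation T2 k n := {ffun (pr n * pr n) -> k}.

Definition xx (k : fieldType) n (a b : pr n) : T2 k n :=
  [ffun p => ((p == (a, b)) : nat)%:R].

Notation rel_idx n :=
  ((pr n + (pr n * pr n)) + (('I_n * 'I_n * 'I_n) + ('I_n * 'I_n * 'I_n)))%type.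

Definition FKrel (k : fieldType) n (l : rel_idx n) : T2 k n :=
  match l with
  | inl (inl (i, j)) => if (i < j)%N then @xx k n (i, j) (i, j) else 0
  | inl (inr ((i, j), (p, q))) =>
      if [&& (i < j)%N, (p < q)%N, i != p, i != q, j != p & j != q]
      then @xx k n (i, j) (p, q) - @xx k n (p, q) (i, j) else 0
  | inr (inl (i, j, m)) =>
      if (i < j)%N && (j < m)%N
      then @xx k n (i, j) (j, m) - @xx k n (j, m) (i, m) - @xx k n (i, m) (i, j) else 0
  | inr (inr (i, j, m)) =>
      if (i < j)%N && (j < m)%N
      then @xx k n (j, m) (i, j) - @xx k n (i, m) (j, m) - @xx k n (i, j) (i, m) else 0
  end.

(* Degree-2 component of the two-sided ideal of relations of E_n: since the
   relations are quadratic, it is their linear span in T(V)_2. *)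
Definition in_FK_ideal2 (k : fieldType) n (t : T2 k n) : Prop :=
  exists c : rel_idx n -> k, forall p, t p = \sum_(l : rel_idx n) c l * @FKrel k n l p.

Definition edgeb n (G : rel 'I_n) (e : pr n) : bool := (e.1 < e.2)%N && G e.1 e.2.

(* E_G = subalgebra of E_n generated by the x_e, e in G, i.e. T(V_G)/I_G with
   I_G = ker (T(V_G) -> E_n).  Degree-2 component of I_G: tensors in the
   generators of G that vanish in E_n.  (I_G has no degree-1 part, and the
   parts of degree >= 3 act trivially on modules concentrated in degrees
   0,1,2.) *)
Definition in_EG_ideal2 (k : fieldType) n (G : rel 'I_n) (t : T2 k n) : Prop :=
  (forall p : pr n * pr n, t p != 0 -> edgeb G p.1 && edgeb G p.2)
  /\ in_FK_ideal2 t.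

(* A degree-2 truncated point module over E_G: a graded module
   M = M_0 (+) M_1 (+) M_2 with M_i = 'rV[k]_1 (Hilbert series 1+t+t^2,
   M_i = 0 for i >= 3).  Since E_G is generated in degree 1, the module
   structure is given by the actions of the generators x_e (e an edge of G),
   acting on row vectors by right multiplication:
     a0 e : M_0 -> M_1,   a1 e : M_1 -> M_2,
   subject to the relations of E_G (the word x_a x_b acts on M_0 by
   v |-> v *m a0 b *m a1 a).  Cyclic, generated in degree 0:
   M_1 = E_1 M_0 and M_2 = E_1 M_1. *)
Definition is_trunc_point_module2 (k : fieldType) n (G : rel 'I_n)
    (a0 a1 : pr n -> 'M[k]_1) : Prop :=
  [/\ (forall t : T2 k n, in_EG_ideal2 G t ->
         \sum_(p : pr n * pr n) t p *: (a0 p.2 *m a1 p.1) = 0),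
      (1%:M <= \sum_(e | edgeb G e) a0 e)%MS
    & (1%:M <= \sum_(e | edgeb G e) a1 e)%MS].

Definition P2_nonempty (k : fieldType) n (G : rel 'I_n) : Prop :=
  exists a0 a1 : pr n -> 'M[k]_1, is_trunc_point_module2 G a0 a1.

Definition disjoint_union_of_complete n (G : rel 'I_n) : Prop :=
  exists f : 'I_n -> 'I_n, forall i j, G i j = (i != j) && (f i == f j).

(* Main.v *)
Require Import Defs.
From HB Require Import structures.
From mathcomp Require Import all_boot all_order all_algebra.
From mathcomp Require Import zify.
Set Implicit Arguments. Unset Strict Implicit. Unset Printing Implicit Defensive.
Import Order.TTheory GRing.Theory Num.Theory.
Local Open Scope ring_scope.

Lemma ordeqE n (a b : 'I_n) : (a == b) = (val a == val b).
Proof. by []. Qed.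

Lemma xxE (k : fieldType) n (a b : pr n) p : @xx k n a b p = ((p == (a,b)) : nat)%:R.
Proof. by rewrite !ffunE. Qed.
Lemma T2subE (k : fieldType) n (f g : T2 k n) p : (f - g) p = f p - g p.
Proof. by rewrite !ffunE. Qed.
Lemma T2sub3E (k : fieldType) n (f g h : T2 k n) p : (f - g - h) p = f p - g p - h p.
Proof. by rewrite !T2subE. Qed.
Lemma xx3E (k : fieldType) n (a b c d e f : pr n) p :
  (@xx k n a b - @xx k n c d - @xx k n e f) p =
  ((p == (a,b)) : nat)%:R - ((p == (c,d)) : nat)%:R - ((p == (e,f)) : nat)%:R.
Proof. by rewrite T2sub3E !xxE. Qed.
Lemma xx2E (k : fieldType) n (a b c d : pr n) p :
  (@xx k n a b - @xx k n c d) p =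
  ((p == (a,b)) : nat)%:R - ((p == (c,d)) : nat)%:R.
Proof. by rewrite T2subE !xxE. Qed.
Lemma T20E (k : fieldType) n p : (0 : T2 k n) p = 0.
Proof. by rewrite !ffunE. Qed.

Lemma sumlE (A B : eqType) (a b : A) : (inl a == inl b :> A + B) = (a == b).
Proof. by []. Qed.
Lemma sumrE (A B : eqType) (a b : B) : (inr a == inr b :> A + B) = (a == b).
Proof. by []. Qed.

Ltac kill_bools :=
  repeat match goal with |- context [nat_of_bool ?B] =>
    lazymatch B with false => fail | true => fail | _ => idtac end;
    let E := fresh in
    have E : B = false; [by apply/negbTE; rewrite ?ordeqE /=; lia | rewrite E] end.

Lemma FK_R1_zero (k : fieldType) n (x y z : 'I_n) (l : rel_idx n) :
  (x < y)%N -> (y < z)%N -> l != inr (inl (x,y,z)) ->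
  [/\ @FKrel k n l ((x,y),(y,z)) = 0, @FKrel k n l ((y,z),(x,z)) = 0
    & @FKrel k n l ((x,z),(x,y)) = 0].
Proof.
move=> xy yz.
case: l => [[[a b]|[[a b] [c d]]]|[[[a b] c]|[[a b] c]]] Hne; rewrite /FKrel;
  (case: ifP => H; [|by rewrite !T20E]).
1: rewrite 3!xxE.
2: rewrite 3!xx2E.
3,4: rewrite 3!xx3E.
all: move: H Hne; rewrite /= ?sumrE ?sumlE ?xpair_eqE ?ordeqE /= => H Hne.
all: split.
all: kill_bools.
all: by rewrite /= ?mulr0n ?subr0.
Qed.

Lemma no_path_complete n (G : rel 'I_n) : symmetric G -> irreflexive G ->
  (forall u v w, G u v -> G v w -> u != w -> G u w) -> disjoint_union_of_complete G.
Proof.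
move=> sG iG tG.
pose P i := fun j => (j == i) || G i j.
have hasP i : has (P i) (enum 'I_n).
  by apply/hasP; exists i; rewrite ?mem_enum // /P /= eqxx.
pose f i := nth i (enum 'I_n) (find (P i) (enum 'I_n)).
have fP i : P i (f i) by apply: nth_find.
have feq i j : P i =1 P j -> f i = f j.
  move=> E; rewrite /f (eq_find E); apply: set_nth_default.
  by rewrite -has_find.
have PE i j : G i j -> P i =1 P j.
  move=> Gij x; rewrite /P.
  have ij : i != j by apply: contraTneq Gij => ->; rewrite iG.
  apply/idP/idP => /orP [/eqP ->|H].
  - by rewrite sG Gij orbT.
  - case: (eqVneq x j) => [_|xj] //=.
    apply: (tG j i x); [by rewrite sG | exact: H | by rewrite eq_sym].
  - by rewrite Gij orbT.
  - case: (eqVneq x i) => [_|xi] //=.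
    apply: (tG i j x); [exact: Gij | exact: H | by rewrite eq_sym].
exists f => i j; apply/idP/idP.
  move=> Gij; rewrite (feq i j (PE i j Gij)) eqxx andbT.
  by apply: contraTneq Gij => ->; rewrite iG.
case/andP => ij /eqP fij.
have := fP i; have := fP j; rewrite /P -fij.
case/orP => [/eqP hj|hj]; case/orP => [/eqP hi|hi].
- by rewrite -hi hj eqxx in ij.
- by rewrite -hj.
- by move: hj; rewrite hi sG.
- by apply: (tG i (f i) j); [exact: hi | rewrite sG; exact: hj | exact: ij].
Qed.

Definition Sc (k : fieldType) n (al be : pr n -> k) (t : T2 k n) : k :=
  \sum_(p : pr n * pr n) t p * (al p.2 * be p.1).

Lemma Sc_xx (k : fieldType) n (al be : pr n -> k) a b :
  Sc al be (@xx k n a b) = al b * be a.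
Proof.
rewrite /Sc (bigD1 (a, b)) /=; last by [].
rewrite xxE eqxx mul1r big1; first by rewrite addr0.
by move=> p /negbTE pab; rewrite xxE pab mul0r.
Qed.

Lemma Sc_sub (k : fieldType) n (al be : pr n -> k) (f g : T2 k n) :
  Sc al be (f - g) = Sc al be f - Sc al be g.
Proof.
by rewrite /Sc -sumrB; apply: eq_bigr => p _; rewrite T2subE mulrBl.
Qed.

Lemma FK_in (k : fieldType) n (l0 : rel_idx n) : in_FK_ideal2 (@FKrel k n l0).
Proof.
exists (fun l => ((l == l0) : nat)%:R) => p.
rewrite (bigD1 l0) /=; last by [].
rewrite eqxx mul1r big1; first by rewrite addr0.
by move=> l /negbTE ->; rewrite mul0r.
Qed.

Lemma EG_in (k : fieldType) n (G : rel 'I_n) (l0 : rel_idx n) (s : seq (pr n * pr n)) :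
  (forall p, @FKrel k n l0 p != 0 -> p \in s) ->
  all (fun p => edgeb G p.1 && edgeb G p.2) s ->
  in_EG_ideal2 G (@FKrel k n l0).
Proof.
move=> Hs /allP Ha; split; last exact: FK_in.
by move=> p /Hs /Ha.
Qed.

Lemma supp1 (k : fieldType) n (a b : pr n) p : @xx k n a b p != 0 -> p \in [:: (a, b)].
Proof. rewrite xxE inE; case: (p == (a,b)); first by []. by rewrite eqxx. Qed.

Lemma supp2 (k : fieldType) n (a b c d : pr n) p :
  (@xx k n a b - @xx k n c d) p != 0 -> p \in [:: (a, b); (c, d)].
Proof.
rewrite xx2E !inE; case: (p == (a,b)); case: (p == (c,d)); try by [].
by rewrite subrr eqxx.
Qed.

Lemma supp3 (k : fieldType) n (a b c d e f : pr n) p :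
  (@xx k n a b - @xx k n c d - @xx k n e f) p != 0 ->
  p \in [:: (a, b); (c, d); (e, f)].
Proof.
rewrite xx3E !inE; case: (p == (a,b)); case: (p == (c,d)); case: (p == (e,f)); try by [].
by rewrite subrr subr0 eqxx.
Qed.

Lemma lin3a (k : comNzRingType) (a b c : k) : a - b - c = 0 -> b = 0 -> c = 0 -> a = 0.
Proof. by move=> h hb hc; rewrite hb hc !subr0 in h. Qed.
Lemma lin3b (k : comNzRingType) (a b c : k) : a - b - c = 0 -> a = 0 -> c = 0 -> b = 0.
Proof. by move=> h ha hc; move: h; rewrite ha hc sub0r subr0 => /eqP; rewrite oppr_eq0 => /eqP. Qed.
Lemma lin3c (k : comNzRingType) (a b c : k) : a - b - c = 0 -> a = 0 -> b = 0 -> c = 0.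
Proof. by move=> h ha hb; move: h; rewrite ha hb subrr sub0r => /eqP; rewrite oppr_eq0 => /eqP. Qed.

Lemma Sc_ann_sq (k : fieldType) n (G : rel 'I_n) (al be : pr n -> k)
  (Hann : forall t, in_EG_ideal2 G t -> Sc al be t = 0) e :
  edgeb G e -> al e * be e = 0.
Proof.
case: e => u1 u2 He.
have E : @FKrel k n (inl (inl (u1, u2))) = xx k (u1, u2) (u1, u2).
  by rewrite /FKrel; case/andP: He => -> _.
rewrite -Sc_xx -E; apply: Hann; apply: (@EG_in k n G _ [:: ((u1,u2),(u1,u2))]).
  by move=> p; rewrite E; apply: supp1.
by rewrite /= He.
Qed.

Lemma Sc_ann_comm (k : fieldType) n (G : rel 'I_n) (al be : pr n -> k)
  (Hann : forall t, in_EG_ideal2 G t -> Sc al be t = 0) (u1 u2 v1 v2 : 'I_n) :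
  edgeb G (u1, u2) -> edgeb G (v1, v2) ->
  u1 != v1 -> u1 != v2 -> u2 != v1 -> u2 != v2 ->
  al (v1, v2) * be (u1, u2) - al (u1, u2) * be (v1, v2) = 0.
Proof.
move=> He Hf n11 n12 n21 n22.
have E : @FKrel k n (inl (inr ((u1, u2), (v1, v2)))) =
         xx k (u1, u2) (v1, v2) - xx k (v1, v2) (u1, u2).
  rewrite /FKrel; case/andP: He => -> _; case/andP: Hf => -> _.
  by rewrite n11 n12 n21 n22.
rewrite -!Sc_xx -Sc_sub -E; apply: Hann.
apply: (@EG_in k n G _ [:: ((u1,u2),(v1,v2)); ((v1,v2),(u1,u2))]).
  by move=> p; rewrite E; apply: supp2.
by rewrite /= He Hf.
Qed.

Lemma Sc_ann_tri (k : fieldType) n (G : rel 'I_n) (al be : pr n -> k)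
  (Hann : forall t, in_EG_ideal2 G t -> Sc al be t = 0) (x y z : 'I_n) :
  edgeb G (x, y) -> edgeb G (y, z) -> edgeb G (x, z) ->
  al (y,z) * be (x,y) - al (x,z) * be (y,z) - al (x,y) * be (x,z) = 0 /\
  al (x,y) * be (y,z) - al (y,z) * be (x,z) - al (x,z) * be (x,y) = 0.
Proof.
move=> H1 H2 H3.
have xy : (x < y)%N by case/andP: H1.
have yz : (y < z)%N by case/andP: H2.
have E1 : @FKrel k n (inr (inl (x, y, z))) =
   xx k (x, y) (y, z) - xx k (y, z) (x, z) - xx k (x, z) (x, y).
  by rewrite /FKrel xy yz.
have E2 : @FKrel k n (inr (inr (x, y, z))) =
   xx k (y, z) (x, y) - xx k (x, z) (y, z) - xx k (x, y) (x, z).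
  by rewrite /FKrel xy yz.
split.
  rewrite -!Sc_xx -!Sc_sub -E1; apply: Hann.
  apply: (@EG_in k n G _ [:: ((x,y),(y,z)); ((y,z),(x,z)); ((x,z),(x,y))]).
    by move=> p; rewrite E1; apply: supp3.
  by rewrite /= H1 H2 H3.
rewrite -!Sc_xx -!Sc_sub -E2; apply: Hann.
apply: (@EG_in k n G _ [:: ((y,z),(x,y)); ((x,z),(y,z)); ((x,y),(x,z))]).
  by move=> p; rewrite E2; apply: supp3.
by rewrite /= H1 H2 H3.
Qed.

Lemma dir1 (k : fieldType) n (G : rel 'I_n) (F : 'I_n -> 'I_n)
  (hG : forall i j, G i j = (i != j) && (F i == F j)) (al be : pr n -> k)
  (Hann : forall t, in_EG_ideal2 G t -> Sc al be t = 0) e f :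
  edgeb G e -> edgeb G f -> be e != 0 -> al f != 0 -> False.
Proof.
move=> He Hf bee alf.
have ale : al e = 0.
  by move/eqP: (Sc_ann_sq Hann He); rewrite mulf_eq0 (negbTE bee) orbF => /eqP.
have bef : be f = 0.
  by move/eqP: (Sc_ann_sq Hann Hf); rewrite mulf_eq0 (negbTE alf) => /eqP.
suff : al f * be e = 0 by move/eqP; rewrite mulf_eq0 (negbTE alf) (negbTE bee).
have cl3 u v w : G u v -> G u w -> v != w -> G v w.
  rewrite !hG => /andP [_ /eqP <-] /andP [_ /eqP <-] ->.
  by rewrite eqxx.
have edge (a b : 'I_n) : (a < b)%N -> G a b -> edgeb G (a, b) by move=> ab gab; rewrite /edgeb /= ab gab.
have ltne (a b : 'I_n) : (a < b)%N -> a != b by move=> ab; apply/eqP => abe; rewrite abe ltnn in ab.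
have tri x y z := @Sc_ann_tri _ _ _ _ _ Hann x y z.
case: (eqVneq e f) => [ef|nef].
  by rewrite ef in ale; rewrite ale mul0r.
move: ale bef nef He Hf bee alf; case: e => u1 u2; case: f => v1 v2 ale bef nef He Hf bee alf.
have /andP [/= u12 Gu] := He; have /andP [/= v12 Gv] := Hf.
have sym (a b : 'I_n) : G a b -> G b a by rewrite !hG eq_sym (eq_sym (F a)).
case: (eqVneq u1 v1) => [e11|n11].
  rewrite -e11 in ale bef nef Hf v12 Gv *.
  have n22 : u2 != v2 by apply: contraNneq nef => ->.
  have G22 : G u2 v2 by apply: cl3 Gu Gv n22.
  case: (ltngtP u2 v2) => [lt|gt|eq2]; last by move: n22; rewrite ordeqE /= eq2 eqxx.
    have [_ R] := tri u1 u2 v2 He (edge _ _ lt G22) Hf.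
    by apply: (lin3c R); rewrite ?ale ?bef ?mul0r ?mulr0.
  have [R _] := tri u1 v2 u2 Hf (edge _ _ gt (cl3 _ _ _ Gv Gu (ltne _ _ gt))) He.
  by apply: (lin3c R); rewrite ?ale ?bef ?mul0r ?mulr0.
case: (eqVneq u1 v2) => [e12|n12].
  rewrite -e12 in ale bef nef Hf v12 Gv *.
  have [_ R] := tri v1 u1 u2 Hf He (edge _ _ (ltn_trans v12 u12) (cl3 _ _ _ (sym _ _ Gv) Gu (ltne _ _ (ltn_trans v12 u12)))).
  by apply: (lin3a R); rewrite ?ale ?bef ?mul0r ?mulr0.
case: (eqVneq u2 v1) => [e21|n21].
  rewrite -e21 in ale bef nef Hf v12 Gv *.
  have Gu' : G u2 u1 by apply: sym.
  have [R _] := tri u1 u2 v2 He Hf (edge _ _ (ltn_trans u12 v12) (cl3 _ _ _ Gu' Gv (ltne _ _ (ltn_trans u12 v12)))).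
  by apply: (lin3a R); rewrite ?ale ?bef ?mul0r ?mulr0.
case: (eqVneq u2 v2) => [e22|n22].
  rewrite -e22 in ale bef nef Hf v12 Gv *.
  have Gu' : G u2 u1 by apply: sym.
  have Gv' : G u2 v1 by apply: sym.
  case: (ltngtP u1 v1) => [lt|gt|eq1]; last by move: n11; rewrite ordeqE /= eq1 eqxx.
    have [_ R] := tri u1 v1 u2 (edge _ _ lt (cl3 _ _ _ Gu' Gv' (ltne _ _ lt))) Hf He.
    by apply: (lin3b R); rewrite ?ale ?bef ?mul0r ?mulr0.
  have [R _] := tri v1 u1 u2 (edge _ _ gt (cl3 _ _ _ Gv' Gu' (ltne _ _ gt))) He Hf.
  by apply: (lin3b R); rewrite ?ale ?bef ?mul0r ?mulr0.
have R := Sc_ann_comm Hann He Hf n11 n12 n21 n22.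
by move: R; rewrite ale mul0r subr0.
Qed.

Lemma FK_R1_val (k : fieldType) n (x y z : 'I_n) :
  (x < y)%N -> (y < z)%N ->
  [/\ @FKrel k n (inr (inl (x,y,z))) ((x,y),(y,z)) = 1,
      @FKrel k n (inr (inl (x,y,z))) ((y,z),(x,z)) = -1
    & @FKrel k n (inr (inl (x,y,z))) ((x,z),(x,y)) = -1].
Proof.
move=> xy yz; rewrite /FKrel xy yz /= 3!xx3E !eqxx.
rewrite /= ?xpair_eqE ?ordeqE /=.
split; kill_bools; by rewrite /= ?mulr0n ?subr0 ?sub0r.
Qed.

Lemma build (k : fieldType) n (G : rel 'I_n) (l0 : rel_idx n) (W0 W' : pr n * pr n) (c' : k) :
  (forall l, l != l0 -> @FKrel k n l W0 = 0 /\ @FKrel k n l W' = 0) ->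
  @FKrel k n l0 W' = c' -> c' != 0 ->
  ~~ (edgeb G W'.1 && edgeb G W'.2) -> edgeb G W0.1 -> edgeb G W0.2 ->
  P2_nonempty k G.
Proof.
move=> Hz HW' c'0 nW' e1 e2.
exists (fun e => if e == W0.2 then 1%:M else 0), (fun e => if e == W0.1 then 1%:M else 0).
split.
- move=> t [Hs [c Hc]].
  have tW' : t W' = 0.
    by case: (eqVneq (t W') 0) => // /Hs H; rewrite H in nW'.
  have tv p : (p = W0) \/ (p = W') -> t p = c l0 * @FKrel k n l0 p.
    move=> hp; rewrite Hc (bigD1 l0) /=; last by [].
    rewrite big1; first by rewrite addr0.
    by move=> l /Hz [h0 h1]; case: hp => ->; rewrite ?h0 ?h1 mulr0.
  have cl0 : c l0 = 0.
    move: tW'; rewrite tv; last by right.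
    by rewrite HW' => /eqP; rewrite mulf_eq0 (negbTE c'0) orbF => /eqP.
  have tW0 : t W0 = 0 by rewrite tv; [rewrite cl0 mul0r | left].
  apply: big1 => p _.
  case: (eqVneq p W0) => [->|pW]; first by rewrite tW0 scale0r.
  case: (eqVneq p.2 W0.2) => h2; last by rewrite mul0mx scaler0.
  case: (eqVneq p.1 W0.1) => h1; last by rewrite mulmx0 scaler0.
  by move: pW; rewrite [p]surjective_pairing h1 h2 -surjective_pairing eqxx.
- rewrite (bigD1 W0.2) /=; last by [].
  rewrite eqxx big1; first exact: addsmxSl.
  by move=> e /andP [_ /negbTE ->].
- rewrite (bigD1 W0.1) /=; last by [].
  rewrite eqxx big1; first exact: addsmxSl.
  by move=> e /andP [_ /negbTE ->].
Qed.

Lemma dir2 (k : fieldType) n (G : rel 'I_n) : symmetric G -> irreflexive G ->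
  forall u v w, G u v -> G v w -> u != w -> ~~ G u w -> P2_nonempty k G.
Proof.
move=> sG iG u v w.
wlog uw : u w / (u < w)%N.
  move=> H Guv Gvw nuw nGuw.
  case: (ltngtP u w) => [lt|gt|eq].
  - exact: (H u w lt Guv Gvw nuw nGuw).
  - apply: (H w u gt); [by rewrite sG | by rewrite sG | by rewrite eq_sym | by rewrite sG].
  - by move: nuw; rewrite ordeqE /= eq eqxx.
move=> Guv Gvw nuw nGuw.
have edge (a b : 'I_n) : (a < b)%N -> G a b -> edgeb G (a, b).
  by move=> ab gab; rewrite /edgeb /= ab gab.
have nedge (a b : 'I_n) : ~~ G a b -> edgeb G (a, b) = false.
  by move=> h; rewrite /edgeb /= (negbTE h) andbF.
have m1 : (-1 : k) != 0 by rewrite oppr_eq0 oner_eq0.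
have p1 : (1 : k) != 0 by rewrite oner_eq0.
case: (ltngtP v u) => [vu|uv|e].
- have vw := ltn_trans vu uw.
  have [h1 h2 h3] := @FK_R1_val k n v u w vu uw.
  apply: (@build k n G (inr (inl (v,u,w))) ((v,w),(v,u)) ((v,u),(u,w)) 1).
  + by move=> l hl; have [z1 z2 z3] := @FK_R1_zero k n v u w l vu uw hl.
  + exact: h1.
  + exact: p1.
  + by rewrite /= (nedge _ _ nGuw) andbF.
  + exact: edge vw Gvw.
  + by apply: edge vu _; rewrite sG.
- case: (ltngtP v w) => [vw|wv|e].
  + have [h1 h2 h3] := @FK_R1_val k n u v w uv vw.
    apply: (@build k n G (inr (inl (u,v,w))) ((u,v),(v,w)) ((v,w),(u,w)) (-1)).
    * by move=> l hl; have [z1 z2 z3] := @FK_R1_zero k n u v w l uv vw hl.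
    * exact: h2.
    * exact: m1.
    * by rewrite /= (nedge _ _ nGuw) andbF.
    * exact: edge uv Guv.
    * exact: edge vw Gvw.
  + have [h1 h2 h3] := @FK_R1_val k n u w v uw wv.
    apply: (@build k n G (inr (inl (u,w,v))) ((w,v),(u,v)) ((u,w),(w,v)) 1).
    * by move=> l hl; have [z1 z2 z3] := @FK_R1_zero k n u w v l uw wv hl.
    * exact: h1.
    * exact: p1.
    * by rewrite /= (nedge _ _ nGuw).
    * by apply: edge wv _; rewrite sG.
    * exact: edge (ltn_trans uw wv) Guv.
  + by move: Gvw; rewrite (val_inj e) iG.
- by move: Guv; rewrite (val_inj e) iG.
Qed.

Theorem corollary3p1 (k : closedFieldType) (n : nat) (G : rel 'I_n) :
  symmetric G -> irreflexive G ->
  (~ P2_nonempty k G <-> disjoint_union_of_complete G).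
Proof.
move=> sG iG; split.
- move=> nP.
  case: (boolP [exists u, exists v, exists w, [&& G u v, G v w, u != w & ~~ G u w]]).
    case/existsP => u /existsP [v /existsP [w /and4P [h1 h2 h3 h4]]].
    by case: nP; apply: (@dir2 k n G sG iG u v w h1 h2 h3 h4).
  move=> hn; apply: no_path_complete => // u v w Guv Gvw nuw.
  move/existsPn/(_ u)/existsPn/(_ v)/existsPn/(_ w): hn.
  by rewrite Guv Gvw nuw /= negbK.
- case=> F hF [a0 [a1 [Hann H0 H1]]].
  pose al := fun e => a0 e 0 0; pose be := fun e => a1 e 0 0.
  have HannS t : in_EG_ideal2 G t -> Sc al be t = 0.
    move=> Ht; move: (Hann t Ht) => /(congr1 (fun M : 'M[k]_1 => M 0 0)).
    rewrite summxE mxE => H; rewrite -[RHS]H /Sc; apply: eq_bigr => p _.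
    by rewrite mxE mxE big_ord1.
  have ex (a : pr n -> 'M[k]_1) :
      (1%:M <= \sum_(e | edgeb G e) a e)%MS -> exists2 e, edgeb G e & a e 0 0 != 0.
    move=> H; case: (boolP [exists e, edgeb G e && (a e 0 0 != 0)]).
      by case/existsP => e /andP [he ha]; exists e.
    move/existsPn => hn; move: H; rewrite big1.
      rewrite submx0 => /eqP/matrixP/(_ 0 0); rewrite !mxE /= => /eqP.
      by rewrite oner_eq0.
    move=> e he; apply/matrixP => i j; rewrite !ord1 mxE.
    by move: (hn e); rewrite he /= negbK => /eqP.
  have [e he bee] := ex a1 H1; have [f hf alf] := ex a0 H0.
  exact: (dir1 hF HannS he hf bee alf).
Qed.
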